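(* Let $G$ be a cubic graph, let $M$ be a perfect matching cut of $G$, and let $C$ be an induced $4$-vertex cycle of $G$. Then exactly one of the following holds: (a) $E(C) \cap M = \emptyset$ and all four outgoing edges of $V(C)$ belong to $M$; (b) $|E(C) \cap M| = 2$, the two edges of $E(C) \cap M$ are vertex-disjoint, and no outgoing edge of $V(C)$ belongs to $M$.
   Context: All graphs are finite, simple and undirected; a graph is cubic if every vertex has exactly three neighbours. A cutset of $G$ is a set $M \subseteq E(G)$ for which there is a bipartition $X \uplus Y = V(G)$ into two nonempty sets such that $M$ is exactly the set of edges with one endpoint in $X$ and one in $Y$. A perfect matching cut is a perfect matching (a set of edges covering every vertex exactly once) that is also a cutset. For $U \subseteq V(G)$, the outgoing edges of $U$ are the edges of $G$ with exactly one endpoint in $U$. For a subgraph $C$, $E(C)$ and $V(C)$ denote its edge set and vertex set. *)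

(* Defs.v *)
From mathcomp Require Import all_boot.
Set Implicit Arguments. Unset Strict Implicit. Unset Printing Implicit Defensive.

Section Graphs.
Variable T : finType.

Definition simple_graph (e : rel T) : Prop :=
  symmetric e /\ irreflexive e.

Definition edges (e : rel T) : {set {set T}} :=
  [set [set x; y] | x in T, y in T & e x y].

Definition cubic (e : rel T) : Prop :=
  forall v : T, #|[set w | e v w]| = 3.

Definition perfect_matching (e : rel T) (M : {set {set T}}) : Prop :=
  M \subset edges e /\ forall v : T, #|[set f in M | v \in f]| = 1.

Definition outgoing (e : rel T) (X : {set T}) : {set {set T}} :=
  [set f in edges e | #|f :&: X| == 1].

Definition cutset (e : rel T) (M : {set {set T}}) : Prop :=
  exists X : {set T}, [/\ X != set0, ~: X != set0 & M = outgoing e X].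

Definition perfect_matching_cut (e : rel T) (M : {set {set T}}) : Prop :=
  perfect_matching e M /\ cutset e M.

Definition induced_C4 (e : rel T) (a b c d : T) : Prop :=
  uniq [:: a; b; c; d] /\
  [/\ e a b, e b c, e c d & e d a] /\ ~~ e a c /\ ~~ e b d.

Definition C4_vertices (a b c d : T) : {set T} := [set a; b; c; d].

Definition C4_edges (a b c d : T) : {set {set T}} :=
  [set [set a; b]; [set b; c]; [set c; d]; [set d; a]].

End Graphs.

(* Main.v *)
Require Import Defs.
From mathcomp Require Import all_boot.
Set Implicit Arguments. Unset Strict Implicit. Unset Printing Implicit Defensive.

Section Aux.
Variables (T : finType) (e : rel T) (X : {set T}).
Hypothesis sg : simple_graph e.

Lemma edgesP x y : e x y -> [set x; y] \in edges e.
Proof. move=> exy; apply/imset2P; exists x y => //; by rewrite !inE exy. Qed.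

Lemma card2I x y : x != y ->
  (#|[set x; y] :&: X| == 1) = ((x \in X) != (y \in X)).
Proof.
move=> nxy.
case hx: (x \in X); case hy: (y \in X) => /=.
- rewrite (setIidPl _); last by apply/subsetP=> z; rewrite !inE => /orP[]/eqP->.
  by rewrite cards2 nxy.
- have -> : [set x; y] :&: X = [set x] by apply/setP=> z; rewrite !inE;
    have [ezx|nzx] := eqVneq z x; have [ezy|nzy] := eqVneq z y; subst;
    rewrite ?eqxx ?hx ?hy ?(negbTE nxy);
    try rewrite (negbTE nzx); try rewrite (negbTE nzy); rewrite //=;
    try by rewrite eqxx in nxy.
  by rewrite cards1.
- have -> : [set x; y] :&: X = [set y] by apply/setP=> z; rewrite !inE;
    have [ezx|nzx] := eqVneq z x; have [ezy|nzy] := eqVneq z y; subst;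
    rewrite ?eqxx ?hx ?hy ?(negbTE nxy);
    try rewrite (negbTE nzx); try rewrite (negbTE nzy); rewrite //=;
    try by rewrite eqxx in nxy.
  by rewrite cards1.
- have -> : [set x; y] :&: X = set0 by apply/setP=> z; rewrite !inE;
    have [ezx|nzx] := eqVneq z x; have [ezy|nzy] := eqVneq z y; subst;
    rewrite ?eqxx ?hx ?hy ?(negbTE nxy);
    try rewrite (negbTE nzx); try rewrite (negbTE nzy); rewrite //=;
    try by rewrite eqxx in nxy.
  by rewrite cards0.
Qed.

Lemma neq_of_e x y : e x y -> x != y.
Proof. by move=> exy; apply/eqP=> exy'; move: exy; rewrite exy' (proj2 sg). Qed.

Lemma outP x y : e x y -> ([set x; y] \in outgoing e X) = ((x \in X) != (y \in X)).
Proof.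
by move=> exy; rewrite inE edgesP //= card2I // neq_of_e.
Qed.

Lemma outE f : f \in outgoing e X ->
  exists x y, [/\ f = [set x; y], e x y, x \in X & y \notin X].
Proof.
rewrite inE => /andP[/imset2P[x y _]]; rewrite inE => exy -> h.
move: h; rewrite card2I; last exact: neq_of_e.
case hx: (x \in X); case hy: (y \in X) => //= _.
  by exists x, y; rewrite hy.
exists y, x; split => //; first by rewrite setUC.
  by rewrite (proj1 sg).
by rewrite hx.
Qed.
End Aux.

Section Aux2.
Variables (T : finType) (e : rel T) (X : {set T}) (M : {set {set T}}).
Hypothesis sg : simple_graph e.
Hypothesis cub : cubic e.
Hypothesis pm : perfect_matching e M.
Hypothesis MX : M = outgoing e X.

Lemma memM x y : e x y -> ([set x; y] \in M) = ((x \in X) != (y \in X)).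
Proof. by move=> exy; rewrite MX outP. Qed.

Lemma match_uniq v y z : e v y -> e v z -> y != z ->
  (v \in X) != (y \in X) -> (v \in X) != (z \in X) -> False.
Proof.
move=> evy evz nyz hy hz.
have := proj2 pm v.
have sub : [set [set v; y]; [set v; z]] \subset [set f in M | v \in f].
  apply/subsetP=> f; rewrite !inE => /orP[]/eqP->; rewrite !inE eqxx andbT /=.
    by rewrite memM.
  by rewrite memM.
have := subset_leq_card sub.
rewrite cards2.
have -> : [set v; y] != [set v; z].
  apply/negP=> /eqP h.
  have : z \in [set v; y] by rewrite h !inE eqxx orbT.
  rewrite !inE => /orP[/eqP zv|/eqP zy].
    by move: (neq_of_e sg evz); rewrite zv eqxx.
  by move: nyz; rewrite zy eqxx.
by move=> h1 h2; rewrite h2 in h1.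
Qed.

Lemma match_ex v : exists z, e v z && ((v \in X) != (z \in X)).
Proof.
have := proj2 pm v.
move=> h; have : 0 < #|[set f in M | v \in f]| by rewrite h.
case/card_gt0P=> f; rewrite inE => /andP[fM vf].
have := fM; rewrite {1}MX => /(outE sg) [x [y [fE exy xX yX]]].
move: vf; rewrite fE !inE => /orP[/eqP->|/eqP->].
  by exists y; rewrite exy xX (negbTE yX).
by exists x; rewrite (proj1 sg) exy xX (negbTE yX).
Qed.

Lemma cubic4 x p q y z : e x p -> e x q -> e x y -> e x z ->
  uniq [:: p; q; y; z] -> False.
Proof.
move=> ep eq ey ez u.
have := uniq_leq_size u (s2 := enum [set w | e x w]).
rewrite -cardE cub /= => h; suff: 4 <= 3 by []; apply: h.
by move=> w; rewrite mem_enum !inE => /or4P[]/eqP->.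
Qed.
End Aux2.

Lemma set1I' (A : finType) (x : A) (M : {set A}) :
  [set x] :&: M = if x \in M then [set x] else set0.
Proof.
by case: ifP => h; apply/setP=> f; rewrite !inE; case: eqP => // ->; rewrite h.
Qed.

Lemma setI4 (A : finType) (x y z w : A) (M : {set A}) :
  [set x; y; z; w] :&: M =
  (if x \in M then [set x] else set0) :|: (if y \in M then [set y] else set0) :|:
  (if z \in M then [set z] else set0) :|: (if w \in M then [set w] else set0).
Proof. by rewrite !setIUl !set1I'. Qed.

Lemma disjP (A : finType) (U W : {set A}) :
  (forall x, x \in U -> x \in W -> False) -> [disjoint U & W].
Proof.
move=> h; rewrite -setI_eq0; apply/eqP/setP=> f; rewrite !inE.
by apply/negbTE/negP=> /andP[] /h H /H.
Qed.

Section Main.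
Variables (T : finType) (e : rel T) (X : {set T}) (M : {set {set T}}) (a b c d : T).
Hypothesis sg : simple_graph e.
Hypothesis cub : cubic e.
Hypothesis pm : perfect_matching e M.
Hypothesis MX : M = outgoing e X.
Hypotheses (eab : e a b) (ebc : e b c) (ecd : e c d) (eda : e d a).
Hypotheses (nab : a != b) (nac : a != c) (nad : a != d) (nbc : b != c) (nbd : b != d) (ncd : c != d).
Hypotheses (nba : b != a) (nca : c != a) (nda : d != a) (ncb : c != b) (ndb : d != b) (ndc : d != c).

Let V := C4_vertices a b c d.

Lemma eba : e b a. Proof. by rewrite (proj1 sg). Qed.
Lemma ecb : e c b. Proof. by rewrite (proj1 sg). Qed.
Lemma edc : e d c. Proof. by rewrite (proj1 sg). Qed.
Lemma ead : e a d. Proof. by rewrite (proj1 sg). Qed.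

Lemma aV : a \in V. Proof. by rewrite !inE eqxx. Qed.
Lemma bV : b \in V. Proof. by rewrite !inE eqxx !orbT. Qed.
Lemma cV : c \in V. Proof. by rewrite !inE eqxx !orbT. Qed.
Lemma dV : d \in V. Proof. by rewrite !inE eqxx !orbT. Qed.

Lemma inV_neq u w : u \in V -> w \notin V -> u != w.
Proof. by move=> uV wV; apply/eqP=> E; move: wV; rewrite -E uV. Qed.

Lemma LB x y p : e x y -> e x p -> y \notin V -> p \in V ->
  (x \in X) != (p \in X) -> ([set x; y] \in M) = false.
Proof.
move=> exy exp yV pV hp; rewrite (memM sg MX) //; apply/negbTE/negP => h.
apply: (match_uniq sg pm MX exy exp _ h hp).
by rewrite eq_sym inV_neq.
Qed.

Lemma LA x y p q : e x y -> e x p -> e x q -> p != q -> p \in V -> q \in V ->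
  y \notin V -> (forall z, z \in V -> (z \in X) = (x \in X)) -> [set x; y] \in M.
Proof.
move=> exy exp exq npq pV qV yV all.
rewrite (memM sg MX) //.
have [z /andP[exz hz]] := match_ex sg pm MX x.
have zV : z \notin V by apply/negP=> /all E; move: hz; rewrite E eqxx.
have [<-|nzy] := eqVneq z y; first done.
exfalso; apply: (cubic4 cub exp exq exy exz).
by rewrite /= !inE !negb_or npq (inV_neq pV yV) (inV_neq pV zV) (inV_neq qV yV) (inV_neq qV zV) /= eq_sym nzy.
Qed.

Lemma caseA : (b \in X) = (a \in X) -> (c \in X) = (a \in X) -> (d \in X) = (a \in X) ->
  C4_edges a b c d :&: M = set0 /\ outgoing e V \subset M.
Proof.
move=> hb hc hd.
have allA : forall z, z \in V -> (z \in X) = (a \in X).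
  by move=> z; rewrite /V /C4_vertices !inE -!orbA => /or4P[]/eqP->.
split.
  by rewrite /C4_edges setI4 !(memM sg MX) // hb hc hd eqxx /= !setU0.
apply/subsetP=> f /(outE sg) [x [y [-> exy xV yV]]].
have allx : forall z, z \in V -> (z \in X) = (x \in X).
  by move=> z zV; rewrite (allA _ zV) (allA _ xV).
move: (xV); rewrite /V /C4_vertices !inE -!orbA => /or4P[]/eqP xE; rewrite xE in exy allx *.
- by apply: (LA exy eab _ nbd bV dV yV allx); rewrite (proj1 sg).
- by apply: (LA exy _ ebc nac aV cV yV allx); rewrite (proj1 sg).
- by apply: (LA exy _ ecd nbd bV dV yV allx); rewrite (proj1 sg).
- by apply: (LA exy _ eda nca cV aV yV allx); rewrite (proj1 sg).
Qed.

Lemma neq_sets (x y z w : T) : x != z -> x != w -> [set x; y] != [set z; w].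
Proof.
move=> h1 h2; apply/negP=> /eqP h.
have : x \in [set z; w] by rewrite -h !inE eqxx.
by rewrite !inE (negbTE h1) (negbTE h2).
Qed.

Lemma caseB1 : (b \in X) = ~~ (a \in X) -> (c \in X) = ~~ (a \in X) -> (d \in X) = (a \in X) ->
  [/\ #|C4_edges a b c d :&: M| = 2,
      (forall f g, f \in C4_edges a b c d :&: M -> g \in C4_edges a b c d :&: M -> f != g ->
                  [disjoint f & g])
    & [disjoint outgoing e V & M]].
Proof.
move=> hb hc hd.
have E : C4_edges a b c d :&: M = [set [set a; b]; [set c; d]].
  rewrite /C4_edges setI4 !(memM sg MX) // hb hc hd.
  by case: (a \in X); rewrite /= ?set0U ?setU0.
split.
- by rewrite E cards2 neq_sets.
- move=> f g; rewrite E !inE => /orP[]/eqP-> /orP[]/eqP-> nfg;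
  [by rewrite eqxx in nfg | clear nfg; apply: disjP => x; rewrite !inE; move=> /orP[]/eqP-> /orP[] h; move: h; apply/negP; assumption | clear nfg; apply: disjP => x; rewrite !inE; move=> /orP[]/eqP-> /orP[] h; move: h; apply/negP; assumption | by rewrite eqxx in nfg].
- apply: disjP => f /(outE sg) [x [y [-> exy xV yV]]].
  move: (xV); rewrite /V /C4_vertices !inE -!orbA => /or4P[]/eqP xE; rewrite xE in exy *.
  + by rewrite (LB exy eab yV bV) // hb; case: (a \in X).
  + by rewrite (LB exy eba yV aV) // hb; case: (a \in X).
  + by rewrite (LB exy ecd yV dV) // hc hd; case: (a \in X).
  + by rewrite (LB exy edc yV cV) // hc hd; case: (a \in X).
Qed.

Lemma caseB2 : (b \in X) = (a \in X) -> (c \in X) = ~~ (a \in X) -> (d \in X) = ~~ (a \in X) ->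
  [/\ #|C4_edges a b c d :&: M| = 2,
      (forall f g, f \in C4_edges a b c d :&: M -> g \in C4_edges a b c d :&: M -> f != g ->
                  [disjoint f & g])
    & [disjoint outgoing e V & M]].
Proof.
move=> hb hc hd.
have E : C4_edges a b c d :&: M = [set [set b; c]; [set d; a]].
  rewrite /C4_edges setI4 !(memM sg MX) // hb hc hd.
  by case: (a \in X); rewrite /= ?set0U ?setU0.
split.
- by rewrite E cards2 neq_sets.
- move=> f g; rewrite E !inE => /orP[]/eqP-> /orP[]/eqP-> nfg;
  [by rewrite eqxx in nfg | clear nfg; apply: disjP => x; rewrite !inE; move=> /orP[]/eqP-> /orP[] h; move: h; apply/negP; assumption | clear nfg; apply: disjP => x; rewrite !inE; move=> /orP[]/eqP-> /orP[] h; move: h; apply/negP; assumption | by rewrite eqxx in nfg].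
- apply: disjP => f /(outE sg) [x [y [-> exy xV yV]]].
  move: (xV); rewrite /V /C4_vertices !inE -!orbA => /or4P[]/eqP xE; rewrite xE in exy *.
  + by rewrite (LB exy ead yV dV) // hd; case: (a \in X).
  + by rewrite (LB exy ebc yV cV) // hb hc; case: (a \in X).
  + by rewrite (LB exy ecb yV bV) // hb hc; case: (a \in X).
  + by rewrite (LB exy eda yV aV) // hd; case: (a \in X).
Qed.
End Main.

Theorem lemma3 (T : finType) (e : rel T) (M : {set {set T}}) (a b c d : T) :
  simple_graph e -> cubic e -> perfect_matching_cut e M ->
  induced_C4 e a b c d ->
  let EC := C4_edges a b c d in
  let out := outgoing e (C4_vertices a b c d) in
  let A := (EC :&: M = set0) /\ out \subset M in
  let B := [/\ #|EC :&: M| = 2,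
               (forall f g, f \in EC :&: M -> g \in EC :&: M -> f != g ->
                  [disjoint f & g])
             & [disjoint out & M]] in
  (A \/ B) /\ ~ (A /\ B).
Proof.
move=> sg cub [pm [X [_ _ MX]]] [u [[eab ebc ecd eda] [nac' nbd']]].
cbv zeta.
move: u; rewrite /= !inE !negb_or => /and4P[/and3P[nab nac nad] /andP[nbc nbd] ncd _].
have nba : b != a by rewrite eq_sym.
have nca : c != a by rewrite eq_sym.
have nda : d != a by rewrite eq_sym.
have ncb : c != b by rewrite eq_sym.
have ndb : d != b by rewrite eq_sym.
have ndc : d != c by rewrite eq_sym.
have eba : e b a by rewrite (proj1 sg).
have ecb : e c b by rewrite (proj1 sg).
have edc : e d c by rewrite (proj1 sg).
have ead : e a d by rewrite (proj1 sg).
split; last first.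
  by move=> [[h _] [h2 _ _]]; move: h2; rewrite h cards0.
have ca : ~~ (((a \in X) != (b \in X)) && ((a \in X) != (d \in X))).
  by apply/negP => /andP[h1 h2]; exact: (match_uniq sg pm MX eab ead nbd h1 h2).
have cb : ~~ (((b \in X) != (a \in X)) && ((b \in X) != (c \in X))).
  by apply/negP => /andP[h1 h2]; exact: (match_uniq sg pm MX eba ebc nac h1 h2).
have cc : ~~ (((c \in X) != (b \in X)) && ((c \in X) != (d \in X))).
  by apply/negP => /andP[h1 h2]; exact: (match_uniq sg pm MX ecb ecd nbd h1 h2).
have cd : ~~ (((d \in X) != (c \in X)) && ((d \in X) != (a \in X))).
  by apply/negP => /andP[h1 h2]; exact: (match_uniq sg pm MX edc eda nca h1 h2).
move: ca cb cc cd.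
case ha: (a \in X); case hb: (b \in X); case hc: (c \in X); case hd: (d \in X) => //= _ _ _ _.
all: first
  [ left; apply: (caseA sg cub pm MX eab ebc ecd eda nac nbd nca); by rewrite ?ha ?hb ?hc ?hd
  | right; apply: (caseB1 sg pm MX eab ebc ecd eda nac nad nbc nbd nca nda ncb ndb); by rewrite ?ha ?hb ?hc ?hd
  | right; apply: (caseB2 sg pm MX eab ebc ecd eda nab nac nbd ncd nba nca ndb ndc); by rewrite ?ha ?hb ?hc ?hd ].
Qed.
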